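(* For every $n\geq1$, $$\sum_{\sigma\in\mathfrak S_{n}}u^{{\rm L}(\sigma)}(-1)^{{\rm RLmin}(\sigma)}=\begin{cases}(1-u)^{\lfloor n/2\rfloor},& n\text{ even},\\ -(1-u)^{\lfloor n/2\rfloor},& n\text{ odd}.\end{cases}$$
   Context: For $\sigma=\sigma_1\cdots\sigma_n\in\mathfrak S_n$: ${\rm L}(\sigma)$ (left peaks) is the number of $i$ with $1\le i<n$ and $\sigma_{i-1}<\sigma_i>\sigma_{i+1}$, with the convention $\sigma_0=0$; ${\rm RLmin}(\sigma)$ is the number of $i$ with $\sigma_j>\sigma_i$ for all $j>i$. *)

(* Defs.v *)
From mathcomp Require Import all_boot all_order all_algebra all_fingroup.
Set Implicit Arguments. Unset Strict Implicit. Unset Printing Implicit Defensive.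
Import GRing.Theory.

(* One-line notation of a permutation s of 'I_n as the word
   sigma_1 ... sigma_n with values in {1,...,n}: sigma_i = s (i-1) + 1. *)
Definition word (n : nat) (s : 'S_n) : seq nat := [seq (s i).+1 | i <- enum 'I_n].

(* sigma_i for 1 <= i <= n, with the convention sigma_0 = 0. *)
Definition letter (w : seq nat) (i : nat) : nat :=
  if i is k.+1 then nth 0 w k else 0.

Definition lpk (w : seq nat) : nat :=
  count (fun i => (letter w i.-1 < letter w i) && (letter w i.+1 < letter w i))
        (iota 1 (size w).-1).

Definition rlmin (w : seq nat) : nat :=
  count (fun i => all (fun j => letter w i < letter w j) (iota i.+1 (size w - i)))
        (iota 1 (size w)).

Definition L (n : nat) (s : 'S_n) : nat := lpk (word s).
Definition RLmin (n : nat) (s : 'S_n) : nat := rlmin (word s).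

Example ex1 : lpk [:: 2; 1; 3] = 1%N. Proof. reflexivity. Qed.
Example ex2 : lpk [:: 1; 3; 2] = 1%N. Proof. reflexivity. Qed.
Example ex3 : lpk [:: 1; 2; 3] = 0%N. Proof. reflexivity. Qed.
Example ex4 : rlmin [:: 2; 1; 3] = 2%N. Proof. reflexivity. Qed.
Example ex5 : rlmin [:: 1; 2; 3] = 3%N. Proof. reflexivity. Qed.
Example ex6 : rlmin [:: 3; 2; 1] = 1%N. Proof. reflexivity. Qed.

(* Main.v *)
Require Import Defs.
From mathcomp Require Import all_boot all_order all_algebra all_fingroup.
Import GRing.Theory.
From mathcomp Require Import zify ring.
Import GRing.Theory.

Definition isPeak (p a : nat) (t : seq nat) : bool :=
  if t is b :: _ then (p < a) && (b < a) else false.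

Fixpoint pk (p : nat) (w : seq nat) : nat :=
  match w with
  | [::] => 0
  | a :: t => isPeak p a t + pk a t
  end.

Fixpoint rl (w : seq nat) : nat :=
  match w with [::] => 0 | a :: t => all (fun b => a < b) t + rl t end.

Definition letterp (p : nat) (w : seq nat) (i : nat) : nat :=
  if i is k.+1 then nth 0 w k else p.

Lemma letterpS p a t j : letterp p (a :: t) j.+1 = letterp a t j.
Proof. by case: j. Qed.

Definition Pk p w i := (letterp p w i.-1 < letterp p w i) && (letterp p w i.+1 < letterp p w i).

Lemma count_Pk w p : count (Pk p w) (iota 1 (size w).-1) = pk p w.
Proof.
elim: w p => [|a t IH] p //=.
case: t IH => [|b t'] IH //.
rewrite -(IH a) /= -[2]/(1 + 1) iotaDl count_map; congr (_ + _).
apply: eq_in_count => i; rewrite mem_iota => /andP [hi _].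
case: i hi => [|k] //= _.
by rewrite /Pk add1n !letterpS.
Qed.

Lemma lpk_pk w : lpk w = pk 0 w.
Proof. exact: (count_Pk w 0). Qed.

Definition Pr p w i := all (fun j => letterp p w i < letterp p w j) (iota i.+1 (size w - i)).

Lemma map_letterp q t : map (letterp q t) (iota 1 (size t)) = t.
Proof.
rewrite -[1]/(1 + 0) iotaDl -map_comp.
rewrite -[RHS](mkseq_nth 0); apply: eq_map => i //.
Qed.

Lemma count_Pr w p : count (Pr p w) (iota 1 (size w)) = rl w.
Proof.
elim: w p => [|a t IH] p //=.
rewrite -(IH a) -[2]/(1 + 1) iotaDl count_map; congr (_ + _).
  rewrite /Pr /= subn1 /= -[2]/(1 + 1) iotaDl all_map.
  rewrite -{3}(map_letterp a t) all_map.
  congr (nat_of_bool _); apply: eq_in_all => j _ /=; by case: j.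
apply: eq_in_count => i _ /=; rewrite /Pr /= subSS.
rewrite -[i.+2]/(1 + i.+1) iotaDl all_map.
apply: eq_in_all => j _ /=; rewrite !add0n; by case: i; case: j.
Qed.

Lemma rlmin_rl w : rlmin w = rl w.
Proof. exact: (count_Pr w 0). Qed.
Definition ins (i x : nat) (w : seq nat) := take i w ++ x :: drop i w.


Lemma pk_cons p a t : pk p (a :: t) = isPeak p a t + pk a t.
Proof. reflexivity. Qed.

Fixpoint dslot (p : nat) (w : seq nat) (i : nat) : nat :=
  match w with
  | [::] => 0
  | a :: t => match i with
              | 0 => isPeak p a t
              | j.+1 => ((j == 0) && isPeak p a t) + dslot a t j
              end
  end.

Lemma pk_ins w p i x : p < x -> all (fun b => b < x) w -> i < size w ->
  pk p (ins i x w) + dslot p w i = (pk p w).+1.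
Proof.
elim: w p i => [|a t IH] p i px; first by move=> _; rewrite ltn0.
move=> /= /andP [ax tx].
case: i => [|j] /=.
  move=> _; rewrite /ins /= /isPeak /= px ax /=.
  case: t {IH} tx => [|b t'] /= tx; rewrite ?(ltnNge x a) ?(ltnW ax) ?andbF ?add0n ?addn0 //.
  lia.
rewrite ltnS => jt.
rewrite /ins /= -/(ins j x t).
have := IH a j ax tx jt.
case: j jt => [|j] jt.
  rewrite /ins take0 drop0 /= (ltnNge x a) (ltnW ax) andbF add0n => H.
  lia.
case: t tx jt {IH} => [|b t'] // tx jt.
have -> : isPeak p a (ins j.+1 x (b :: t')) = isPeak p a (b :: t') by [].
rewrite /= add0n => H.
lia.
Qed.

Lemma dslot_le1 p w i : dslot p w i <= 1.
Proof.
elim: w p i => [|a t IH] p [|j] //=.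
- by rewrite /isPeak; case: t {IH} => [|b t'] //; case: (_ && _).
case: j => [|j] /=; last by rewrite add0n.
case: t {IH} => [|b t'] //=.
rewrite /isPeak; case: t' => [|c t''] /=.
  by case: (_ && _).
case: (ltnP b a) => ba.
  by rewrite (ltnNge a b) (ltnW ba) /= addn0; case: (_ && _).
by rewrite andbF add0n; case: (_ && _).
Qed.

Lemma sum_dslot p w : \sum_(i < size w) dslot p w i = 2 * pk p w.
Proof.
elim: w p => [|a t IH] p; first by rewrite big_ord0.
rewrite pk_cons big_ord_recl.
rewrite (eq_bigr (fun j : 'I_(size t) => ((j == 0 :> nat) && isPeak p a t) + dslot a t j)); last by [].
rewrite big_split /= IH.
case: t {IH} => [|b t'] /=.
  by rewrite big_ord0.
rewrite big_ord_recl /= big1 ?addn0; last by move=> i _.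
lia.
Qed.

Lemma pk_rcons p w x : all (fun b => b < x) w -> pk p (rcons w x) = pk p w.
Proof.
elim: w p => [|a t IH] p //=; move=> /andP [ax tx].
rewrite IH //; congr (_ + _).
case: t {IH} tx => [|b t'] _ //=.
by rewrite (ltnNge x a) (ltnW ax) andbF.
Qed.

Lemma all_ins (P : pred nat) i x w : all P (ins i x w) = P x && all P w.
Proof.
by rewrite /ins all_cat /= -{3}(cat_take_drop i w) all_cat andbCA.
Qed.

Lemma rl_ins w i x : all (fun b => b < x) w -> i < size w -> rl (ins i x w) = rl w.
Proof.
elim: w i => [|a t IH] i; first by move=> _; rewrite ltn0.
move=> /= /andP [ax tx].
case: i => [|j] /=.
  by rewrite /ins /= (ltnNge x a) (ltnW ax).
rewrite ltnS => jt.
by rewrite /ins /= -/(ins j x t) IH // all_ins ax.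
Qed.

Lemma rl_rcons w x : all (fun b => b < x) w -> rl (rcons w x) = (rl w).+1.
Proof.
elim: w => [|a t IH] //=; move=> /andP [ax tx].
by rewrite IH // all_rcons ax addnS.
Qed.

Lemma ins_size w x : ins (size w) x w = rcons w x.
Proof. by rewrite /ins take_size drop_size cats1. Qed.

Lemma iotaS1 n : iota 1 n.+1 = rcons (iota 1 n) n.+1.
Proof. by rewrite -[n.+1]addn1 iotaD add1n cats1 addn1. Qed.

Lemma perm_ins i x w : perm_eq (ins i x w) (x :: w).
Proof.
rewrite /ins -cat1s perm_catCA /= perm_cons.
by rewrite cat_take_drop.
Qed.

Lemma perms_eq n :
  perm_eq (permutations (iota 1 n.+1))
    [seq ins i n.+1 w | w <- permutations (iota 1 n), i <- iota 0 n.+1].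
Proof.
apply: uniq_perm; first exact: permutations_uniq.
  apply: allpairs_uniq; [exact: permutations_uniq | exact: iota_uniq |].
  move=> [w i] [w' i'] hA hB.
  case/allpairsP: hA => [[w1 i1] [/= h1 h2 [-> ->]]].
  case/allpairsP: hB => [[w2 i2] [/= h3 h4 [-> ->]]] /=.
  rewrite mem_permutations in h1; rewrite mem_permutations in h3.
  move: h2 h4; rewrite -[0 :: iota 1 n]/(iota 0 n.+1) !mem_iota /= !add0n => h2 h4.
  have s1 : size w1 = n by rewrite (perm_size h1) size_iota.
  have s2 : size w2 = n by rewrite (perm_size h3) size_iota.
  have n1 : n.+1 \notin w1 by rewrite (perm_mem h1) mem_iota ltnn andbF.
  have n2 : n.+1 \notin w2 by rewrite (perm_mem h3) mem_iota ltnn andbF.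
  have i1s : i1 <= size w1 by rewrite s1 -ltnS.
  have i2s : i2 <= size w2 by rewrite s2 -ltnS.
  have idx w0 j : n.+1 \notin w0 -> j <= size w0 -> index n.+1 (ins j n.+1 w0) = j.
    move=> nw js; rewrite /ins index_cat.
    have -> : n.+1 \in take j w0 = false.
      by apply/negbTE; apply: contra nw; apply: mem_take.
    by rewrite /= eqxx addn0 size_takel.
  move=> E.
  have ei : i1 = i2 by rewrite -(idx _ _ n1 i1s) E idx.
  subst i2; congr (_, _).
  move: E; rewrite /ins => /eqP; rewrite eqseq_cat; last by rewrite !size_takel // s1 -s2.
  case/andP => /eqP e1 /eqP [e2].
  by rewrite -(cat_take_drop i1 w1) e1 e2 cat_take_drop.
move=> v; rewrite mem_permutations.
apply/idP/allpairsP.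
  move=> pv.
  have xv : n.+1 \in v by rewrite (perm_mem pv) mem_iota ltnSn.
  case/splitPr: xv pv => v1 v2 pv.
  exists (v1 ++ v2, size v1) => /=; split.
  - rewrite mem_permutations -(perm_cons n.+1).
    by move: pv; rewrite iotaS1 -cat1s perm_catCA perm_sym perm_rcons perm_sym.
  - rewrite -[0 :: iota 1 n]/(iota 0 n.+1) mem_iota /= add0n ltnS.
    have := perm_size pv; rewrite size_iota size_cat /= => H; lia.
  - by rewrite /ins take_size_cat // drop_size_cat.
case=> [[w i]] /= [h1 h2 ->].
rewrite mem_permutations in h1.
by rewrite -[1 :: iota 2 n]/(iota 1 n.+1) (permPl (perm_ins i n.+1 w)) iotaS1 perm_sym perm_rcons perm_cons perm_sym.
Qed.


Local Open Scope ring_scope.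

Lemma slot_sum p x w : (p < x)%N -> all (fun b => b < x)%N w ->
  \sum_(i < size w) ('X^(pk p (ins i x w)) : {poly int}) =
  (2 * pk p w)%N%:R * 'X^(pk p w) + ((size w)%:R - (2 * pk p w)%N%:R) * 'X^((pk p w).+1).
Proof.
move=> px wx.
rewrite (eq_bigr (fun i : 'I_(size w) => (dslot p w i)%:R * 'X^(pk p w)
   + (1 - (dslot p w i)%:R) * 'X^((pk p w).+1))); last first.
  move=> i _.
  have := @pk_ins w p i x px wx (ltn_ord i).
  have := dslot_le1 p w i.
  case: (dslot p w i) => [|[|d]] // _.
    by rewrite addn0 => ->; rewrite mul0r add0r subr0 mul1r.
  rewrite addn1 => -[->]; rewrite mul1r subrr mul0r addr0 //.
rewrite big_split /= -!big_distrl /= sumrB -natr_sum sum_dslot.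
by rewrite sumr_const card_ord.
Qed.

Lemma slot_all n w : size w = n -> all (fun b => b < n.+1)%N w ->
  \sum_(i < n.+1) ('X^(pk 0 (ins i n.+1 w)) * (-1) ^+ rl (ins i n.+1 w) : {poly int}) =
  (-1) ^+ rl w * ((2 * pk 0 w)%N%:R * 'X^(pk 0 w) + (n%:R - (2 * pk 0 w)%N%:R) * 'X^((pk 0 w).+1)
     - 'X^(pk 0 w)).
Proof.
move=> sw wx; subst n.
rewrite big_ord_recr /=.
rewrite (eq_bigr (fun i : 'I_(size w) => 'X^(pk 0 (ins i (size w).+1 w)) * (-1) ^+ rl w)); last first.
  by move=> i _; rewrite rl_ins.
rewrite -big_distrl /= slot_sum // ins_size pk_rcons // rl_rcons // [(-1) ^+ (rl w).+1]exprS.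
ring.
Qed.

Lemma sum_rec n (G : seq nat -> {poly int}) :
  \sum_(v <- permutations (iota 1 n.+1)) G v =
  \sum_(w <- permutations (iota 1 n)) \sum_(i < n.+1) G (ins i n.+1 w).
Proof.
rewrite (perm_big _ (perms_eq n)) big_allpairs_dep /=.
apply: eq_bigr => w _.
by rewrite -(big_mkord xpredT (fun i => G (ins i n.+1 w))).
Qed.

Lemma word_nth n (s : 'S_n) (k : 'I_n) : nth 0%N (word s) k = (s k).+1.
Proof.
by rewrite /word (nth_map k) ?size_enum_ord ?ltn_ord // nth_ord_enum.
Qed.

Lemma word_inj n : injective (@word n).
Proof.
move=> s t E; apply/permP => k; apply: val_inj.
by have := @word_nth n s k; rewrite E word_nth => -[].
Qed.

Lemma word_perm n (s : 'S_n) : perm_eq (word s) (iota 1 n).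
Proof.
have -> : word s = map (fun k : 'I_n => (1 + k)%N) (map s (enum 'I_n)).
  by rewrite -map_comp.
have -> : iota 1 n = map (fun k : 'I_n => (1 + k)%N) (enum 'I_n).
  by rewrite -[1%N]/(1 + 0)%N iotaDl -val_enum_ord -map_comp.
apply: perm_map; apply: uniq_perm.
- by rewrite map_inj_uniq ?enum_uniq //; exact: perm_inj.
- exact: enum_uniq.
move=> y; rewrite mem_enum; apply/mapP; exists (s^-1 y)%g; first by rewrite mem_enum.
by rewrite permKV.
Qed.

Lemma sum_Sn n (G : seq nat -> {poly int}) :
  \sum_(s : 'S_n) G (word s) = \sum_(w <- permutations (iota 1 n)) G w.
Proof.
rewrite -(big_map (@word n) xpredT G).
apply: perm_big.
have U : uniq (map (@word n) (index_enum {perm 'I_n})).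
  by rewrite map_inj_uniq ?index_enum_uniq //; exact: word_inj.
have S : {subset map (@word n) (index_enum {perm 'I_n}) <= permutations (iota 1 n)}.
  by move=> w /mapP [s _ ->]; rewrite mem_permutations word_perm.
apply: (uniq_perm U (permutations_uniq _)).
have Hs : (size (permutations (iota 1 n)) <= size (map (@word n) (index_enum {perm 'I_n})))%N.
  by rewrite size_permutations ?iota_uniq // size_iota size_map -card_Sn cardT enumT /index_enum unlock.
by have [] := uniq_min_size U S Hs.
Qed.

Definition F n : {poly int} := \sum_(w <- permutations (iota 1 n)) 'X^(pk 0 w) * (-1) ^+ rl w.

Lemma deriv_sign (r : nat) : ((-1) ^+ r : {poly int})^`() = 0.
Proof. by rewrite deriv_exp derivN derivC oppr0 mul0r mul0rn. Qed.

Lemma term_eq (k r n : nat) :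
  ((-1) ^+ r * ((2 * k)%N%:R * 'X^k + (n%:R - (2 * k)%N%:R) * 'X^(k.+1) - 'X^k) : {poly int}) =
  (n%:R * 'X - 1) * ('X^k * (-1) ^+ r) + 2%:R * (1 - 'X) * ('X * ('X^k * (-1) ^+ r)^`()).
Proof.
rewrite derivM deriv_sign mulr0 addr0 derivXn.
have E : ('X * ('X^(k.-1) *+ k) : {poly int}) = k%:R * 'X^k.
  case: k => [|k]; first by rewrite mulr0n mulr0 mul0r.
  by rewrite /= mulrnAr -exprS mulr_natl.
have -> : ('X * ('X^(k.-1) *+ k * (-1) ^+ r) : {poly int}) = k%:R * 'X^k * (-1) ^+ r.
  by rewrite mulrA E.
rewrite natrM exprS.
ring.
Qed.

Lemma F_rec n : F n.+1 = (n%:R * 'X - 1) * F n + 2%:R * (1 - 'X) * ('X * (F n)^`()).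
Proof.
rewrite /F sum_rec.
rewrite (eq_big_seq (fun w => (-1) ^+ rl w * ((2 * pk 0 w)%N%:R * 'X^(pk 0 w)
    + (n%:R - (2 * pk 0 w)%N%:R) * 'X^((pk 0 w).+1) - 'X^(pk 0 w)))); last first.
  move=> w; rewrite mem_permutations => h.
  apply: slot_all; first by rewrite (perm_size h) size_iota.
  apply/allP => b; rewrite (perm_mem h) mem_iota => /andP [_].
  by rewrite add1n.
rewrite raddf_sum mulr_sumr mulr_sumr mulr_sumr -big_split /=.
by apply: eq_bigr => w _; rewrite term_eq.
Qed.

Lemma dP m : ((1 - 'X) * ((1 - 'X) ^+ m)^`() : {poly int}) = - (m%:R * (1 - 'X) ^+ m).
Proof.
rewrite deriv_exp derivB derivX derivC.
case: m => [|m]; first by rewrite !mulr0n mulr0 mul0r oppr0.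
rewrite -mulr_natr /= exprS; ring.
Qed.

Lemma F0 : F 0 = 1.
Proof. by rewrite /F (_ : permutations (iota 1 0) = [:: [::]]) // big_seq1 /= mulr1. Qed.

Lemma F_closed m : F (m.*2) = (1 - 'X) ^+ m /\ F (m.*2).+1 = - (1 - 'X) ^+ m.
Proof.
elim: m => [|m [IH1 IH2]].
  split; first by rewrite F0.
  by rewrite F_rec F0 derivC mulr0 mulr0 addr0 mul0r add0r expr0 mulN1r.
have H1 : F (m.*2).+1 = - (1 - 'X) ^+ m.
  exact: IH2.
have H2 : F (m.+1.*2) = (1 - 'X) ^+ m.+1.
  rewrite doubleS F_rec H1 derivN mulrN mulrN.
  have -> : 2%:R * (1 - 'X) * - ('X * ((1 - 'X) ^+ m)^`()) = - (2%:R * 'X * ((1 - 'X) * ((1 - 'X) ^+ m)^`())) :> {poly int} by ring.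
  rewrite dP -addn1 natrD -muln2 natrM exprS; ring.
split => //.
rewrite F_rec H2.
have -> : 2%:R * (1 - 'X) * ('X * ((1 - 'X) ^+ m.+1)^`()) = 2%:R * 'X * ((1 - 'X) * ((1 - 'X) ^+ m.+1)^`()) :> {poly int} by ring.
rewrite dP -muln2 natrM; ring.
Qed.

Theorem theorem1p7 (n : nat) : (1 <= n)%N ->
  \sum_(s : 'S_n) ('X ^+ L s * (-1) ^+ RLmin s : {poly int})
  = (if ~~ odd n then (1 - 'X) ^+ n./2 else - (1 - 'X) ^+ n./2).
Proof.
move=> _.
have -> : \sum_(s : 'S_n) ('X ^+ L s * (-1) ^+ RLmin s : {poly int}) = F n.
  rewrite /F -sum_Sn; apply: eq_bigr => s _.
  by rewrite /L /RLmin lpk_pk rlmin_rl.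
rewrite -[n in F n](odd_double_half n).
case: (F_closed n./2) => E0 E1.
by case: (odd n); rewrite /= ?add0n ?E0 ?E1.
Qed.
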